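(* For every integer $n\ge 1$, let $M(n)$ denote the maximum modulus of an independence root over all (simple) graphs on $n$ vertices. Then $$M(n)\ge \begin{cases} 3^{\frac{n-3}{3}} & \text{if } n\equiv 0 \pmod 3,\\ 3^{\frac{n-1}{3}} & \text{if } n\equiv 1 \pmod 3,\\ 3^{\frac{n-2}{3}} & \text{if } n\equiv 2 \pmod 3.\end{cases}$$
   Context: For a finite simple graph $G$, the independence polynomial is $i(G,x)=\sum_{k=0}^{\alpha(G)} i_k x^k$, where $i_k$ is the number of independent sets of size $k$ in $G$ (with $i_0=1$) and $\alpha(G)$ is the independence number (maximum size of an independent set). Its roots in $\mathbb{C}$ are the independence roots of $G$. *)

(* Defs.v *)
From mathcomp Require Import all_boot all_order all_algebra all_field.
Set Implicit Arguments. Unset Strict Implicit. Unset Printing Implicit Defensive.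
Import Order.TTheory GRing.Theory Num.Theory.
Local Open Scope ring_scope.

Definition simple_graph (n : nat) (E : {set {set 'I_n}}) : bool :=
  [forall e in E, #|e| == 2%N].

Definition independent (n : nat) (E : {set {set 'I_n}}) (S : {set 'I_n}) : bool :=
  [forall e in E, ~~ (e \subset S)].

Definition indep_poly (n : nat) (E : {set {set 'I_n}}) : {poly algC} :=
  \sum_(S : {set 'I_n} | independent E S) 'X^#|S|.

Definition rootsC (p : {poly algC}) : seq algC := sval (closed_field_poly_normal p).

(* Maximum modulus of an independence root of G (0 if there are none). *)
Definition max_indep_root_modulus (n : nat) (E : {set {set 'I_n}}) : algC :=
  \big[Num.max/0]_(z <- rootsC (indep_poly E)) `|z|.

Definition M (n : nat) : algC :=
  \big[Num.max/0]_(E : {set {set 'I_n}} | simple_graph E) max_indep_root_modulus E.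

(* Main.v *)
From mathcomp Require Import all_boot all_order all_algebra all_field.
From mathcomp Require Import zify ring lra.
Require Import Defs.
Set Implicit Arguments. Unset Strict Implicit. Unset Printing Implicit Defensive.
Import Order.TTheory GRing.Theory Num.Theory.
Local Open Scope ring_scope.

Definition adj n (E : {set {set 'I_n}}) (a b : 'I_n) := [set a; b] \in E.

Definition Pu n (E : {set {set 'I_n}}) (U : {set 'I_n}) : {poly algC} :=
  \sum_(S : {set 'I_n} | (S \subset U) && independent E S) 'X^#|S|.

Lemma indepP n (E : {set {set 'I_n}}) (S : {set 'I_n}) : simple_graph E ->
  reflect (forall a b, a \in S -> b \in S -> ~~ adj E a b) (independent E S).
Proof.
move=> sE; apply: (iffP forallP) => [h a b aS bS|h e].
  apply/negP => abE; have := h [set a; b]; rewrite /adj in abE; rewrite abE /= => /negP; apply.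
  by apply/subsetP => x; rewrite !inE => /orP[]/eqP->.
apply/implyP => eE; apply/negP => eS.
have := forallP sE e; rewrite eE /= => /cards2P [x [y [_ exy]]].
rewrite exy in eS eE.
have xS : x \in S by apply: (subsetP eS); rewrite !inE eqxx.
have yS : y \in S by apply: (subsetP eS); rewrite !inE eqxx orbT.
by move: (h x y xS yS); rewrite /adj eE.
Qed.

Lemma adjC n (E : {set {set 'I_n}}) a b : adj E a b = adj E b a.
Proof. by rewrite /adj setUC. Qed.

Lemma adj_irr n (E : {set {set 'I_n}}) a : simple_graph E -> ~~ adj E a a.
Proof.
move=> sE; apply/negP => h; have := forallP sE [set a; a].
by rewrite /adj in h; rewrite h /= cards2 eqxx.
Qed.

Lemma Pdel n (E : {set {set 'I_n}}) (U U1 U2 : {set 'I_n}) v :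
  simple_graph E -> v \in U ->
  (forall u, (u \in U1) = (u \in U) && (u != v)) ->
  (forall u, (u \in U2) = [&& u \in U, u != v & ~~ adj E u v]) ->
  Pu E U = Pu E U1 + 'X * Pu E U2.
Proof.
move=> sE vU h1 h2; rewrite /Pu (bigID (fun S : {set 'I_n} => v \notin S)) /=; congr (_ + _).
  have -> : U1 = U :\ v by apply/setP => u; rewrite in_setD1 h1 andbC.
  by apply: eq_bigl => S; rewrite subsetD1 andbAC.
rewrite mulr_sumr (reindex_onto (fun S' => v |: S') (fun S => S :\ v)) /=;
  last by move=> S /andP[_]; rewrite negbK => ?; rewrite setD1K.
apply: eq_big => S.
  apply/idP/idP.
    move=> /andP[/andP[/andP[sU iS] _] /eqP eS].
    have vS : v \notin S by rewrite -eS !inE eqxx.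
    apply/andP; split.
      apply/subsetP => u uS; rewrite h2.
      rewrite (subsetP sU) ?inE ?uS ?orbT //=.
      have -> /= : u != v by apply: contraNneq vS => <-.
      by move/indepP: iS => /(_ sE); apply; rewrite !inE ?uS ?eqxx ?orbT.
    apply/indepP => // a b aS bS; move/indepP: iS => /(_ sE); apply;
      by rewrite !inE ?aS ?bS ?orbT.
  move=> /andP[sU2 iS].
  have vS : v \notin S by apply/negP => /(subsetP sU2); rewrite h2 eqxx andbF.
  rewrite in_setU1 eqxx /= andbT setU1K // eqxx andbT; apply/andP; split.
    apply/subsetP => u; rewrite in_setU1 => /orP[/eqP->//|/(subsetP sU2)].
    by rewrite h2 => /andP[].
  apply/indepP => // a b; rewrite !in_setU1.
  move=> /orP[/eqP->|aS] /orP[/eqP->|bS].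
  - exact: adj_irr.
  - by rewrite adjC; move: (subsetP sU2 b bS); rewrite h2 => /and3P[].
  - by move: (subsetP sU2 a aS); rewrite h2 => /and3P[].
  - by move/indepP: iS => /(_ sE); apply.
move=> /andP[_ /eqP eS]; have vS : v \notin S by rewrite -eS !inE eqxx.
by rewrite cardsU1 vS /= add1n exprS.
Qed.

Lemma Pu_empty n (E : {set {set 'I_n}}) (U : {set 'I_n}) : simple_graph E ->
  (forall u, u \notin U) -> Pu E U = 1.
Proof.
move=> sE hU; rewrite /Pu (eq_bigl (fun S => S == set0)).
  by rewrite big_pred1_eq cards0 expr0.
move=> S; apply/idP/idP.
  move=> /andP[/subsetP sU _]; apply/eqP/setP => x; rewrite inE.
  by apply/negP => /sU; rewrite (negbTE (hU x)).
move/eqP->; rewrite sub0set /=; apply/indepP => // a b; by rewrite inE.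
Qed.

Definition adjn (k a b : nat) : bool :=
  ([|| [&& a < 3 * k, b < 3 * k, a %/ 3 == b %/ 3 & a != b],
      [&& a == 3 * k, b < 3 * k & b %% 3 != 0]
    | [&& b == 3 * k, a < 3 * k & a %% 3 != 0]])%N.

Definition Egr n k : {set {set 'I_n}} :=
  [set e | [exists u : 'I_n, exists w : 'I_n, adjn k u w && (e == [set u; w])]].

Lemma adjn_neq k a b : adjn k a b -> a != b.
Proof. rewrite /adjn; lia. Qed.

Lemma adjnC k a b : adjn k a b = adjn k b a.
Proof. rewrite /adjn; lia. Qed.

Lemma Egr_simple n k : simple_graph (Egr n k).
Proof.
apply/forallP => e; apply/implyP; rewrite inE => /existsP[u /existsP[w /andP[h /eqP->]]].
by rewrite cards2 (_ : (u != w) = true) //; apply: adjn_neq h.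
Qed.

Lemma Egr_adj n k (a b : 'I_n) : adj (Egr n k) a b = adjn k a b.
Proof.
rewrite /adj inE; apply/idP/idP; last first.
  by move=> h; apply/existsP; exists a; apply/existsP; exists b; rewrite h eqxx.
move=> /existsP[u /existsP[w /andP[h /eqP e]]].
have aI : a \in [set u; w] by rewrite -e !inE eqxx.
have bI : b \in [set u; w] by rewrite -e !inE eqxx orbT.
have uI : u \in [set a; b] by rewrite e !inE eqxx.
have wI : w \in [set a; b] by rewrite e !inE eqxx orbT.
move: aI bI uI wI h; rewrite !inE -!val_eqE /adjn /=; lia.
Qed.

Definition Pn n k (f : nat -> bool) := Pu (Egr n k) [set u : 'I_n | f (val u)].

Lemma Pn_ext n k (f g : nat -> bool) :
  (forall u, (u < n)%N -> f u = g u) -> Pn n k f = Pn n k g.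
Proof.
move=> h; rewrite /Pn; apply: f_equal; apply/setP => u; rewrite !inE; exact: (h _ (ltn_ord u)).
Qed.

Lemma Pn_empty n k (f : nat -> bool) :
  (forall u, (u < n)%N -> f u = false) -> Pn n k f = 1.
Proof.
move=> h; apply: Pu_empty; first exact: Egr_simple.
by move=> u; rewrite inE h ?ltn_ord.
Qed.

Lemma Pn_del n k (f f1 f2 : nat -> bool) c : (c < n)%N -> f c ->
  (forall u, (u < n)%N -> f1 u = f u && (u != c)) ->
  (forall u, (u < n)%N -> f2 u = [&& f u, u != c & ~~ adjn k u c]) ->
  Pn n k f = Pn n k f1 + 'X * Pn n k f2.
Proof.
move=> hc fc h1 h2; rewrite /Pn.
apply: (@Pdel _ _ _ _ _ (Ordinal hc)); first exact: Egr_simple.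
- by rewrite inE.
- by move=> u; rewrite !inE h1 ?ltn_ord // -val_eqE.
- by move=> u; rewrite !inE h2 ?ltn_ord // Egr_adj -val_eqE.
Qed.

Lemma PQ n k m r : n = (3 * k + 1 + m)%N -> (r <= m)%N ->
  Pn n k (fun u => (3 * k < u < 3 * k + 1 + r)%N) = (1 + 'X) ^+ r.
Proof.
move=> hn; elim: r => [|r IH] hr.
  by rewrite expr0; apply: Pn_empty => u _; lia.
rewrite (@Pn_del _ _ _ (fun u => (3 * k < u < 3 * k + 1 + r)%N)
                      (fun u => (3 * k < u < 3 * k + 1 + r)%N) (3 * k + 1 + r)).
- by rewrite IH 1?ltnW // exprS; ring.
- lia.
- lia.
- move=> u _; lia.
- move=> u _; rewrite /adjn; lia.
Qed.

Lemma PA n k m j : n = (3 * k + 1 + m)%N -> (j <= k)%N ->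
  Pn n k (fun u => (u < 3 * j) || (3 * k < u))%N = (1 + 3%:R * 'X) ^+ j * (1 + 'X) ^+ m.
Proof.
move=> hn; elim: j => [|j IH] hj.
  rewrite expr0 mul1r -(PQ hn (leqnn m)); apply: Pn_ext => u hu; lia.
rewrite (@Pn_del _ _ _ (fun u => (u < 3 * j) || (u == 3 * j + 1) || (u == 3 * j + 2) || (3 * k < u))%N
                      (fun u => (u < 3 * j) || (3 * k < u))%N (3 * j)); last first.
- move=> u _; rewrite /adjn; lia.
- move=> u _; lia.
- lia.
- lia.
rewrite (@Pn_del _ _ (fun u => (u < 3 * j) || (u == 3 * j + 1) || (u == 3 * j + 2) || (3 * k < u))%N
                      (fun u => (u < 3 * j) || (u == 3 * j + 2) || (3 * k < u))%N
                      (fun u => (u < 3 * j) || (3 * k < u))%N (3 * j + 1)); last first.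
- move=> u _; rewrite /adjn; lia.
- move=> u _; lia.
- lia.
- lia.
rewrite (@Pn_del _ _ (fun u => (u < 3 * j) || (u == 3 * j + 2) || (3 * k < u))%N
                      (fun u => (u < 3 * j) || (3 * k < u))%N
                      (fun u => (u < 3 * j) || (3 * k < u))%N (3 * j + 2)); last first.
- move=> u _; rewrite /adjn; lia.
- move=> u _; lia.
- lia.
- lia.
rewrite IH 1?ltnW // exprS; ring.
Qed.

Lemma PB n k m j : n = (3 * k + 1 + m)%N -> (j <= k)%N ->
  Pn n k (fun u => ((u < 3 * j) && (u %% 3 == 0)) || (3 * k < u))%N = (1 + 'X) ^+ (j + m).
Proof.
move=> hn; elim: j => [|j IH] hj.
  rewrite add0n -(PQ hn (leqnn m)); apply: Pn_ext => u hu; lia.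
rewrite (@Pn_del _ _ _ (fun u => ((u < 3 * j) && (u %% 3 == 0)) || (3 * k < u))%N
                      (fun u => ((u < 3 * j) && (u %% 3 == 0)) || (3 * k < u))%N (3 * j)); last first.
- move=> u _; rewrite /adjn; lia.
- move=> u _; lia.
- lia.
- lia.
rewrite IH 1?ltnW // addSn exprS; ring.
Qed.

Lemma Pfull n k m : n = (3 * k + 1 + m)%N ->
  indep_poly (Egr n k) = (1 + 3%:R * 'X) ^+ k * (1 + 'X) ^+ m + 'X * (1 + 'X) ^+ (k + m).
Proof.
move=> hn.
have -> : indep_poly (Egr n k) = Pn n k (fun _ => true).
  rewrite /indep_poly /Pn /Pu; apply: eq_bigl => S.
  by rewrite (_ : S \subset _) //; apply/subsetP => x; rewrite inE.
rewrite (@Pn_del _ _ _ (fun u => (u < 3 * k) || (3 * k < u))%N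
                      (fun u => ((u < 3 * k) && (u %% 3 == 0)) || (3 * k < u))%N (3 * k)); last first.
- move=> u _; rewrite /adjn; lia.
- move=> u _; lia.
- by [].
- lia.
by rewrite (PA hn (leqnn k)) (PB hn (leqnn k)).
Qed.
Definition gval {R : comRingType} k m (t : R) :=
  ((3%:R * t - 1) ^+ k - t * (t - 1) ^+ k) * (t - 1) ^+ m.

Lemma g_a (R : realFieldType) k m : 0 <= gval k m (3%:R ^+ k : R).
Proof.
set a : R := 3%:R ^+ k.
have a1 : 1 <= a by rewrite exprn_ege1 // ler1n.
rewrite /gval; apply: mulr_ge0; last by rewrite exprn_ge0 // subr_ge0.
rewrite subr_ge0.
have -> : a * (a - 1) ^+ k = (3%:R * a - 3%:R) ^+ k.
  by rewrite -[in LHS]/a -exprMn; congr (_ ^+ _); ring.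
apply: lerXn2r; rewrite ?nnegrE; lra.
Qed.

Lemma g_b (R : realFieldType) k m : gval k m (4%:R ^+ k + 2%:R : R) <= 0.
Proof.
have d1 : 1 <= 4%:R ^+ k :> R by rewrite exprn_ege1 // ler1n.
rewrite /gval; apply: mulr_le0_ge0; last by rewrite exprn_ge0 //; lra.
rewrite subr_le0.
have -> : (4%:R ^+ k + 2%:R - 1 : R) = 4%:R ^+ k + 1 by ring.
apply: (@le_trans _ _ ((4%:R * (4%:R ^+ k + 1)) ^+ k)).
  by apply: lerXn2r; rewrite ?nnegrE; lra.
rewrite exprMn; apply: ler_wpM2r; first by rewrite exprn_ge0 //; lra.
lra.
Qed.

Definition gp k m : {poly algR} :=
  ((3%:R *: 'X - 1) ^+ k - 'X * ('X - 1) ^+ k) * ('X - 1) ^+ m.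

Lemma gp_horner k m t : (gp k m).[t] = gval k m t.
Proof. by rewrite /gp /gval !hornerE. Qed.

Lemma root_exists k m : exists t : algR, (3%:R ^+ k <= t) /\ gval k m t = 0.
Proof.
have a1 : 1 <= 3%:R ^+ k :> algR by rewrite exprn_ege1 // ler1n.
have ab : 3%:R ^+ k <= 4%:R ^+ k + 2%:R :> algR.
  apply: (@le_trans _ _ (4%:R ^+ k)); last by rewrite lerDl.
  by apply: lerXn2r; rewrite ?nnegrE ?ler0n ?ler_nat.
have h0 : (0 : algR) \in `[(- gp k m).[3%:R ^+ k], (- gp k m).[4%:R ^+ k + 2%:R]].
  by rewrite in_itv /= !hornerN !gp_horner oppr_le0 oppr_ge0 g_a g_b.
have [t /andP[ht1 ht2] rt] := poly_ivt ab h0.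
by exists t; split => //; move: rt; rewrite /root hornerN gp_horner oppr_eq0 => /eqP.
Qed.

Lemma val_gval k m (t : algR) : algRval (gval k m t) = gval k m (algRval t).
Proof. by rewrite /gval !(rmorphM, rmorphB, rmorphXn, rmorph1, rmorph_nat). Qed.

Lemma F_eval k m (T : algC) :
  ((1 + 3%:R * 'X) ^+ k * (1 + 'X) ^+ m + 'X * (1 + 'X) ^+ (k + m) : {poly algC}).[- T]
  = (-1) ^+ (k + m) * gval k m T.
Proof.
have E (a b : algC) j : a = - b -> a ^+ j = (-1) ^+ j * b ^+ j.
  by move=> ->; rewrite -exprMn mulN1r.
rewrite !(hornerD, hornerM, horner_exp, hornerX, hornerC, hornerN, hornerMn) /gval.
rewrite (E _ (3%:R * T - 1) k); last by ring.
rewrite (E _ (T - 1) m); last by ring.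
rewrite (E _ (T - 1) (k + m)); last by ring.
rewrite !exprD.
move: ((-1) ^+ k) ((-1) ^+ m) => s1 s2; ring.
Qed.

Lemma max_ge (x y : algC) : 0 <= x -> 0 <= y ->
  [/\ x <= Num.max x y, y <= Num.max x y & 0 <= Num.max x y].
Proof.
move=> hx hy; rewrite /Num.max /Order.max; case: ifP => h.
  by split => //; exact: ltW.
have hyx : y <= x by rewrite real_leNgt ?h ?ger0_real.
by split.
Qed.

Lemma bigmax_ge (I : eqType) (r : seq I) (P : pred I) (F : I -> algC) :
  (forall i, 0 <= F i) ->
  0 <= \big[Num.max/0]_(i <- r | P i) F i /\
  (forall j, j \in r -> P j -> F j <= \big[Num.max/0]_(i <- r | P i) F i).
Proof.
move=> F0; elim: r => [|a r [IH0 IH]]; first by rewrite big_nil.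
rewrite big_cons; case: ifP => Pa.
  have [h1 h2 h3] := @max_ge _ _ (F0 a) IH0.
  split => // j; rewrite in_cons => /orP[/eqP-> //|jr Pj].
  exact: le_trans (IH j jr Pj) h2.
split => // j; rewrite in_cons => /orP[/eqP->|jr Pj]; first by rewrite Pa.
exact: IH.
Qed.

Lemma in_rootsC (p : {poly algC}) z : p != 0 -> root p z -> z \in rootsC p.
Proof.
move=> p0 rz; rewrite /rootsC; case: (closed_field_poly_normal p) => r /= hr.
move: rz; rewrite {1}hr rootZ ?lead_coef_eq0 //.
by rewrite root_prod_XsubC.
Qed.

Lemma main_k n k : (3 * k + 1 <= n)%N -> 3%:R ^+ k <= M n :> algC.
Proof.
move=> hk; set m := (n - (3 * k + 1))%N.
have hn : n = (3 * k + 1 + m)%N by rewrite /m; lia.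
have [t [ht gt]] := root_exists k m.
set T := algRval t.
have hT : 3%:R ^+ k <= T.
  have : algRval (3%:R ^+ k) <= T := ht.
  by rewrite rmorphXn rmorph_nat.
have gT : gval k m T = 0 by rewrite /T -val_gval gt rmorph0.
have rz : root (indep_poly (Egr n k)) (- T).
  by rewrite /root (Pfull hn) F_eval gT mulr0.
have nz : indep_poly (Egr n k) != 0.
  apply/negP => /eqP h0.
  have : (indep_poly (Egr n k)).[0] = 0 by rewrite h0 horner0.
  rewrite (Pfull hn) !(hornerD, hornerM, horner_exp, hornerX, hornerC, hornerMn).
  rewrite !(mulr0, addr0, mul0r, expr1n, mulr1) => /eqP; by rewrite oner_eq0.
have zin := in_rootsC nz rz.
have T0 : 0 <= T by apply: le_trans hT; rewrite exprn_ge0 // ler0n.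
have h1 : 3%:R ^+ k <= `|- T| by rewrite normrN ger0_norm.
have h2 := (@bigmax_ge _ (rootsC (indep_poly (Egr n k))) xpredT (fun z => `|z|) (fun z => normr_ge0 z)).2 _ zin isT.
have h3 := (@bigmax_ge _ (index_enum {set {set 'I_n}}) (fun E => simple_graph E)
              (@max_indep_root_modulus n)
              (fun E => (@bigmax_ge _ _ xpredT _ (fun z => normr_ge0 z)).1)).2
              (Egr n k) (mem_index_enum _) (Egr_simple n k).
apply: le_trans h1 _; apply: le_trans h2 _; exact: h3.
Qed.

Theorem proposition2 (n : nat) : (1 <= n)%N ->
  (if (n %% 3 == 0)%N then 3%:R ^+ ((n - 3) %/ 3)%N
   else if (n %% 3 == 1)%N then 3%:R ^+ ((n - 1) %/ 3)%N
   else 3%:R ^+ ((n - 2) %/ 3)%N) <= M n :> algC.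
Proof.
move=> hn; case: ifP => h0; first by apply: main_k; lia.
case: ifP => h1; apply: main_k; lia.
Qed.
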